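(* In the joint communication and channel discrimination setting described in the context, let $\{\mathcal{C}_n\}_{n\in\mathbb{N}}$ be a sequence of codebooks (of codes with $P_{e,n}\to0$) that achieves the tuple $(R,E_0,E_1)\in\mathcal{R}$. Then there exists a sequence of constant composition codes that also achieves $(R,E_0,E_1)$.
   Context: Finite alphabets $\mathcal{X},\mathcal{Y},\mathcal{Z}$; memoryless channels $P_{Z^n|X^n}(z^n|x^n)=\prod_iP_{Z|X}(z_i|x_i)$ (communication) and $W_n(y^n|x^n)=\prod_iW(y_i|x_i)$, $V_n(y^n|x^n)=\prod_iV(y_i|x_i)$ (sensing under $\theta=0$, $\theta=1$), with $W(y|x)V(y|x)\ne0$; cost function $b:\mathcal{X}\to\mathbb{R}_+$ and budget $B\ge0$. An $(n,|\mathcal{M}_n|)$-code has message set $\mathcal{M}_n=\{1,\dots,|\mathcal{M}_n|\}$, encoder $f_n:\mathcal{M}_n\to\mathcal{X}^n$ with codewords satisfying $\frac1n\sum_ib(x_i)\le B$ (codebook $\mathcal{C}_n$), decoder $\varphi_n:\mathcal{Z}^n\to\mathcal{M}_n$, and discrimination function $\psi_n(y^n,x^n)\in\{0,1\}$. $P_{e,n}=\max_m\Pr[\varphi_n(Z^n)\ne m\mid M=m]$; $\varepsilon_{0,n}(x^n)=\sum_{y^n:\psi_n(y^n,x^n)=1}W_n(y^n|x^n)$, $\varepsilon_{1,n}(x^n)=\sum_{y^n:\psi_n(y^n,x^n)=0}V_n(y^n|x^n)$, $\varepsilon_{j,n}(\mathcal{C}_n)=\max_{x^n\in\mathcal{C}_n}\varepsilon_{j,n}(x^n)$,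 and it is required that $\max\{\varepsilon_{0,n}(\mathcal{C}_n),\varepsilon_{1,n}(\mathcal{C}_n)\}\le\tau$ for all $n$ for some constant $\tau<1$. A sequence of codes achieves $(R,E_0,E_1)$ if $P_{e,n}\to0$, $R=\liminf_n\frac1n\log|\mathcal{M}_n|$, $E_j=\liminf_n-\frac1n\log\varepsilon_{j,n}(\mathcal{C}_n)$; $\mathcal{R}$ is the closure of the set of achievable triples. A constant composition code is one in which all codewords have the same type (empirical distribution $\mathsf{P}_{x^n}(a)=\frac1n|\{i:x_i=a\}|$). *)

(* Defs.v *)
From HB Require Import structures.
From mathcomp Require Import all_boot all_order all_algebra.
From mathcomp Require Import all_classical all_reals all_analysis.
Set Implicit Arguments. Unset Strict Implicit. Unset Printing Implicit Defensive.
Import Order.TTheory GRing.Theory Num.Theory.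
Import numFieldNormedType.Exports.
Local Open Scope classical_set_scope.
Local Open Scope ring_scope.

Notation word A n := {ffun 'I_n -> A}.

(* Memoryless extension of a channel Q(y|x) (written Q x y). *)
Definition mless (R : pzRingType) (A B : finType) (Q : A -> B -> R) (n : nat)
  (x : word A n) (y : word B n) : R := \prod_(i < n) Q (x i) (y i).

Definition stochastic (R : numDomainType) (A B : finType) (Q : A -> B -> R) :=
  (forall a b, 0 <= Q a b) /\ (forall a, \sum_(b : B) Q a b = 1).

(* An (n, M)-code: message set 'I_M (i.e. {1,...,M}), M >= 1, encoder,
   decoder, and discrimination function psi(y^n, x^n) in {0,1}
   (true = decide theta = 1). *)
Record jcode (X Y Z : finType) (n : nat) := JCode {
  msize : nat;
  msize_gt0 : (0 < msize)%N;
  enc : 'I_msize -> word X n;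
  dec : word Z n -> 'I_msize;
  disc : word Y n -> word X n -> bool }.
Arguments msize {X Y Z n}.
Arguments enc {X Y Z n} _ _.
Arguments dec {X Y Z n} _ _.
Arguments disc {X Y Z n} _ _ _.

Section CodeDefs.
Variables (R : realType) (X Y Z : finType).

(* Cost constraint: (1/n) sum_i b(x_i) <= B, written as sum_i b(x_i) <= n B. *)
Definition cost_ok (b : X -> R) (B : R) n (c : jcode X Y Z n) :=
  forall m, \sum_(i < n) b (enc c m i) <= n%:R * B.

Definition Pe (PZ : X -> Z -> R) n (c : jcode X Y Z n) : R :=
  \big[Num.max/0]_(m : 'I_(msize c))
     \sum_(z : word Z n | dec c z != m) mless PZ (enc c m) z.

Definition eps0 (W : X -> Y -> R) n (c : jcode X Y Z n) (x : word X n) : R :=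
  \sum_(y : word Y n | disc c y x) mless W x y.
Definition eps1 (V : X -> Y -> R) n (c : jcode X Y Z n) (x : word X n) : R :=
  \sum_(y : word Y n | ~~ disc c y x) mless V x y.

Definition eps0C (W : X -> Y -> R) n (c : jcode X Y Z n) : R :=
  \big[Num.max/0]_(m : 'I_(msize c)) eps0 W c (enc c m).
Definition eps1C (V : X -> Y -> R) n (c : jcode X Y Z n) : R :=
  \big[Num.max/0]_(m : 'I_(msize c)) eps1 V c (enc c m).

Definition expo (e : R) (n : nat) : \bar R :=
  if e == 0 then +oo%E else EFin (- ln e / n%:R).

Definition achieves (PZ : X -> Z -> R) (W V : X -> Y -> R) (b : X -> R) (B : R)
  (C : forall n, jcode X Y Z n) (Rt E0 E1 : \bar R) : Prop :=
  [/\ forall n, cost_ok b B (C n),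
      (exists2 tau : R, tau < 1 & forall n, (0 < n)%N ->
          Num.max (eps0C W (C n)) (eps1C V (C n)) <= tau),
      (fun n => Pe PZ (C n)) @ \oo --> (0 : R) &
    [/\ Rt = limn_einf (fun n => EFin (ln (msize (C n))%:R / n%:R)),
      E0 = limn_einf (fun n => expo (eps0C W (C n)) n) &
      E1 = limn_einf (fun n => expo (eps1C V (C n)) n)]].

Definition ptype n (x : word X n) (a : X) : R :=
  #|[set i : 'I_n | x i == a]|%:R / n%:R.

Definition const_comp n (c : jcode X Y Z n) : Prop :=
  forall m m' : 'I_(msize c), ptype (enc c m) = ptype (enc c m').

End CodeDefs.
Arguments const_comp {R X Y Z n} c.

(* Main.v *)
Require Import Defs.
From HB Require Import structures.
From mathcomp Require Import all_boot all_order all_algebra.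
From mathcomp Require Import all_classical all_reals all_analysis.
From mathcomp Require Import ring lra zify.
Import Order.TTheory GRing.Theory Num.Theory.
Local Open Scope ring_scope.
Section Gen.
Context {R : realType}.

Lemma sum_ge_term (I : finType) (F : I -> R) j :
  (forall i, 0 <= F i) -> F j <= \sum_i F i.
Proof. by move=> h; rewrite (bigD1 j) //= lerDl sumr_ge0. Qed.

Lemma sum_or (T : finType) (p : T -> R) (P1 P2 : pred T) :
  (forall y, 0 <= p y) ->
  \sum_(y | P1 y || P2 y) p y <= \sum_(y | P1 y) p y + \sum_(y | P2 y) p y.
Proof.
move=> h; rewrite [X in X <= _]big_mkcond [X in _ <= X + _]big_mkcond.
rewrite [X in _ <= _ + X]big_mkcond -big_split /=.
apply: ler_sum => y _; case: (P1 y); case: (P2 y) => /=;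
  by rewrite ?addr0 ?add0r ?lerDl.
Qed.

Lemma sum_sub (T : finType) (p : T -> R) (P1 P2 : pred T) :
  (forall y, 0 <= p y) -> (forall y, P1 y -> P2 y) ->
  \sum_(y | P1 y) p y <= \sum_(y | P2 y) p y.
Proof.
move=> h hs; rewrite big_mkcond [X in _ <= X]big_mkcond /=.
apply: ler_sum => y _; case h1: (P1 y); first by rewrite (hs _ h1).
by case: (P2 y).
Qed.

Lemma le_bmax (I : finType) (F : I -> R) j :
  F j <= \big[Num.max/0]_i F i.
Proof.
rewrite /index_enum; move: (mem_index_enum j); rewrite /index_enum.
elim: (Finite.enum I) => // a r IH; rewrite inE big_cons => /orP[/eqP->|/IH h].
  by rewrite le_max lexx.
by rewrite le_max h orbT.
Qed.

Lemma bmax_le (I : finType) (F : I -> R) c :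
  0 <= c -> (forall i, F i <= c) -> \big[Num.max/0]_i F i <= c.
Proof.
move=> c0 h; elim/big_ind: _ => // x y hx hy.
by rewrite ge_max hx hy.
Qed.

Lemma bmax_ge0 (I : finType) (F : I -> R) : 0 <= \big[Num.max/0]_i F i.
Proof.
rewrite /index_enum; elim: (Finite.enum I) => [|a r IH]; first by rewrite big_nil.
by rewrite big_cons le_max IH orbT.
Qed.

Lemma chain_pick (K : R) (f : nat -> R) (t : R) L :
  0 < K -> f 0%N <= t -> t < f L -> (forall j, f j.+1 <= K * f j) ->
  exists j, t / K <= f j <= t.
Proof.
move=> K0 f0 fL hs.
suff : forall m, f m <= t \/ exists j, t / K <= f j <= t.
  by move=> /(_ L) [|//]; rewrite leNgt fL.
elim=> [|m [IH|IH]]; [by left| |by right].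
have [h|h] := leP (f m.+1) t; first by left.
right; exists m; rewrite IH andbT ler_pdivrMr // mulrC.
exact: (ltW (lt_le_trans h (hs m))).
Qed.

Lemma prefix_pick (T : Type) (p : T -> R) (t : R) (s : seq T) (c : R) :
  c < t -> t <= c + \sum_(y <- s) p y -> (forall y, p y <= t) ->
  exists k, t <= c + \sum_(y <- take k s) p y <= t + t.
Proof.
elim: s c => [|a s IH] c ct; first by rewrite big_nil addr0 leNgt ct.
rewrite big_cons => hs hp.
have [h|h] := leP t (c + p a).
  exists 1%N; rewrite /= take0 big_cons big_nil addr0 h /=.
  by rewrite lerD // ltW.
have hs' : t <= c + p a + \sum_(y <- s) p y by rewrite -addrA.
have [k hk] := IH (c + p a) h hs' hp.
by exists k.+1; rewrite /= big_cons addrA.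
Qed.

End Gen.
Section Words.
Context {R : realType} {X Y : finType} (Q : X -> Y -> R).
Hypothesis hQ0 : forall a y, 0 < Q a y.
Hypothesis hQ1 : forall a, \sum_y Q a y = 1.

Lemma mless_gt0 {n} (x : word X n) y : 0 < mless Q x y.
Proof. by rewrite /mless; apply: prodr_gt0 => i _; exact: hQ0. Qed.

Lemma mless_ge0 {n} (x : word X n) y : 0 <= mless Q x y.
Proof. exact/ltW/mless_gt0. Qed.

Lemma mless_sum1 {n} (x : word X n) : \sum_(y : word Y n) mless Q x y = 1.
Proof.
rewrite /mless -(bigA_distr_bigA (fun (i : 'I_n) (b : Y) => Q (x i) b)) /=.
by apply: big1 => i _; exact: hQ1.
Qed.

Lemma msum_le1 {n} (x : word X n) (P : pred (word Y n)) :
  \sum_(y | P y) mless Q x y <= 1.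
Proof.
rewrite -(mless_sum1 x); apply: sum_sub => //; exact: mless_ge0.
Qed.

Definition Kc : R := 1 + \sum_a \sum_(y : Y) \sum_(y' : Y) Q a y / Q a y'.

Lemma Kc_ge1 : 1 <= Kc.
Proof.
rewrite /Kc lerDl; do 3!(apply: sumr_ge0 => ? _).
by rewrite divr_ge0 // ltW.
Qed.

Lemma Kc_gt0 : 0 < Kc.
Proof. exact: (lt_le_trans ltr01 Kc_ge1). Qed.

Lemma ratio_le a y y' : Q a y / Q a y' <= Kc.
Proof.
have h0 : forall a y y', 0 <= Q a y / Q a y' by move=> *; rewrite divr_ge0 // ltW.
have hs : \sum_a \sum_(y : Y) \sum_(y' : Y) Q a y / Q a y' <= Kc by rewrite /Kc lerDr.
apply: (le_trans _ hs).
apply: (le_trans _ (sum_ge_term _ (fun a => \sum_(y : Y) \sum_(y' : Y) Q a y / Q a y') a _)).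
  apply: (le_trans _ (sum_ge_term _ (fun y => \sum_(y' : Y) Q a y / Q a y') y _)).
    exact: (sum_ge_term _ (fun y' => Q a y / Q a y') y' _).
  by move=> ?; apply: sumr_ge0 => ? _.
by move=> ?; do 2!(apply: sumr_ge0 => ? _).
Qed.

Definition mix {n} (y0 y1 : word Y n) (k : nat) : word Y n :=
  [ffun i : 'I_n => if (i < k)%N then y1 i else y0 i].

Lemma mix0 {n} (y0 y1 : word Y n) : mix y0 y1 0 = y0.
Proof. by apply/ffunP => i; rewrite ffunE. Qed.

Lemma mixn {n} (y0 y1 : word Y n) : mix y0 y1 n = y1.
Proof. by apply/ffunP => i; rewrite ffunE ltn_ord. Qed.

Lemma mix_step {n} (x : word X n) y0 y1 k :
  mless Q x (mix y0 y1 k.+1) <= Kc * mless Q x (mix y0 y1 k).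
Proof.
have [hk|hk] := ltnP k n.
  rewrite /mless (bigD1 (Ordinal hk)) //= [X in _ <= _ * X](bigD1 (Ordinal hk)) //=.
  rewrite !ffunE /= ltnSn ltnn.
  have -> : \prod_(i < n | i != Ordinal hk) Q (x i) (mix y0 y1 k.+1 i) =
            \prod_(i < n | i != Ordinal hk) Q (x i) (mix y0 y1 k i).
    apply: eq_bigr => i hi; rewrite !ffunE ltnS leq_eqVlt.
    suff -> : (nat_of_ord i == k) = false by [].
    by apply/negbTE; apply: contra hi => /eqP h; apply/eqP/val_inj.
  rewrite mulrA ler_wpM2r //; first by apply: prodr_ge0 => i _; exact/ltW.
  by rewrite -ler_pdivrMr // ratio_le.
have -> : mix y0 y1 k.+1 = mix y0 y1 k.
  apply/ffunP => i; rewrite !ffunE.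
  have h1 : (i < k.+1)%N by rewrite (leq_trans (ltn_ord i)) // ltnW.
  have h2 : (i < k)%N by rewrite (leq_trans (ltn_ord i)).
  by rewrite h1 h2.
by rewrite ler_peMl // ?Kc_ge1 // mless_ge0.
Qed.

Lemma worsen {n} (x : word X n) (S : pred (word Y n)) (A : R) :
  (exists y0, S y0) -> 0 < A -> A <= 1 -> \sum_(y | S y) mless Q x y <= A ->
  exists S' : pred (word Y n), (forall y, S y -> S' y) /\
    A / (3%:R * Kc) <= \sum_(y | S' y) mless Q x y <= A.
Proof.
move=> [y0 Sy0] A0 A1 aA.
set a := \sum_(y | S y) mless Q x y.
have K0 := Kc_gt0; have K1 := Kc_ge1.
have [ha|ha] := leP (A / (3%:R * Kc)) a.
  by exists S; split => //; rewrite ha aA.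
set t := A / 3%:R.
have t0 : 0 < t by rewrite divr_gt0.
have tK : A / (3%:R * Kc) = t / Kc by rewrite invfM mulrA.
have tKt : t / Kc <= t by rewrite ler_pdivrMr // ler_peMr // ltW.
have At : A = t + t + t by rewrite /t; field.
have hge : forall P : pred (word Y n), 0 <= \sum_(y | P y) mless Q x y.
  by move=> P; apply: sumr_ge0 => y _; exact: mless_ge0.
have mge := mless_ge0 x.
have [[y1 hy1]|hall] := pselect (exists y1, t < mless Q x y1).
  pose f k := mless Q x (mix y0 y1 k).
  have [|||j hj] := @chain_pick R Kc f t n K0.
  - rewrite /f mix0; apply: (le_trans _ tKt); rewrite -tK.
    apply: (le_trans _ (ltW ha)).
    rewrite /a (bigD1 y0) //= lerDl; exact: hge.
  - by rewrite /f mixn.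
  - by move=> k; exact: mix_step.
  exists (fun y => S y || (y == mix y0 y1 j)); split => [y ->//|].
  apply/andP; split.
    rewrite tK; apply: le_trans (proj1 (andP hj)) _.
    rewrite (bigD1 (mix y0 y1 j)) /=; last by rewrite eqxx orbT.
    by rewrite lerDl; exact: hge.
  apply: le_trans (sum_or _ _ _ _ mge) _.
  rewrite big_pred1_eq.
  rewrite At; apply: lerD; last by case/andP: hj.
  apply: le_trans (ltW ha) _; rewrite tK; apply: le_trans tKt _.
  by rewrite lerDl ltW.
have hp : forall y, mless Q x y <= t.
  by move=> y; rewrite leNgt; apply/negP => h; apply: hall; exists y.
have [||k hk] := @prefix_pick R _ (mless Q x) t (enum (word Y n)) 0 t0.
- rewrite add0r big_enum /= mless_sum1 /t ler_pdivrMr // mul1r.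
  by apply: le_trans A1 _; rewrite ler1n.
- exact: hp.
exists (fun y => S y || (y \in take k (enum (word Y n)))); split => [y ->//|].
have hT : \sum_(y <- take k (enum (word Y n))) mless Q x y =
          \sum_(y | y \in take k (enum (word Y n))) mless Q x y.
  by rewrite big_uniq // take_uniq // enum_uniq.
rewrite add0r hT in hk; case/andP: hk => hk1 hk2.
apply/andP; split.
  rewrite tK; apply: le_trans tKt _; apply: le_trans hk1 _.
  by apply: sum_sub => // y ->; rewrite orbT.
apply: le_trans (sum_or _ _ _ _ mge) _.
rewrite At -addrA; apply: lerD => //.
apply: le_trans (ltW ha) _; rewrite tK; exact: tKt.
Qed.

Lemma exists_of_lt1 {n} (x : word X n) (P : pred (word Y n)) :
  \sum_(y | ~~ P y) mless Q x y < 1 -> exists y, P y.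
Proof.
move=> h; have [//|hne] := pselect (exists y, P y).
suff : \sum_(y | ~~ P y) mless Q x y = 1 by move=> e; move: h; rewrite e ltxx.
rewrite -(mless_sum1 x); apply: eq_bigl => y; apply/negP => py; apply: hne; by exists y.
Qed.

Lemma sum_pos {n} (x : word X n) (P : pred (word Y n)) :
  (exists y, P y) -> 0 < \sum_(y | P y) mless Q x y.
Proof.
move=> [y py]; rewrite (bigD1 y) //= ltr_pwDl ?mless_gt0 //.
by apply: sumr_ge0 => z _; exact: mless_ge0.
Qed.

End Words.
Section Sub.
Context {R : realType} {X Y Z : finType} {n : nat} (c : jcode X Y Z n).

Definition cnt (x : word X n) (a : X) : 'I_n.+1 := inord #|[set i : 'I_n | x i == a]%classic|.
Definition tp (m : 'I_(msize c)) : {ffun X -> 'I_n.+1} := [ffun a => cnt (enc c m) a].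
Definition m0 : 'I_(msize c) := Ordinal (msize_gt0 c).
Definition tstar := [arg max_(t > tp m0) #|[set m | tp m == t]|].
Definition Fset := [set m | tp m == tstar].

Lemma Fset_big : (#|[set m | tp m == tp m0]| <= #|Fset|)%N.
Proof.
rewrite /Fset /tstar; case: arg_maxnP => //= t _ h; exact: h.
Qed.

Lemma Fpos : (0 < #|Fset|)%N.
Proof.
apply: leq_trans Fset_big; apply/card_gt0P; exists m0; by rewrite inE.
Qed.

Lemma Fset_le : (#|Fset| <= msize c)%N.
Proof. by rewrite -[X in (_ <= X)%N]card_ord max_card. Qed.

Lemma Fset_ge : (msize c <= #|Fset| * (n.+1) ^ #|X|)%N.
Proof.
rewrite -[X in (X <= _)%N]card_ord.
have -> : #|'I_(msize c)| = (\sum_(t : {ffun X -> 'I_n.+1}) #|[set m | tp m == t]|)%N.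
  rewrite -sum1_card (partition_big tp xpredT) //=.
  by apply: eq_bigr => t _; rewrite -sum1_card; apply: eq_bigl => m; rewrite inE.
rewrite mulnC -[X in (X ^ _)%N](card_ord n.+1) -card_ffun -sum_nat_const.
apply: leq_sum => t _; rewrite /Fset /tstar; case: arg_maxnP => //= t' _ h; exact: h.
Qed.

Definition j0 : 'I_#|Fset| := Ordinal Fpos.
Lemma x0F : enum_val j0 \in Fset. Proof. exact: enum_valP. Qed.

Definition encS (j : 'I_#|Fset|) : word X n := enc c (enum_val j).
Definition decS (z : word Z n) : 'I_#|Fset| := enum_rank_in x0F (dec c z).
Definition xs : word X n := encS j0.

Definition subc (D : word Y n -> bool) : jcode X Y Z n :=
  @JCode X Y Z n #|Fset| Fpos encS decS
    (fun y x => if x == xs then D y else disc c y x).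

Lemma subc_msize D : msize (subc D) = #|Fset|. Proof. by []. Qed.

Lemma subc_cost (b : X -> R) B D : cost_ok b B c -> cost_ok b B (subc D).
Proof. by move=> h m; exact: h. Qed.

Lemma subc_Pe (PZ : X -> Z -> R) D : (forall a z, 0 <= PZ a z) ->
  Pe PZ (subc D) <= Pe PZ c.
Proof.
move=> hP; apply: bmax_le; first exact: bmax_ge0.
move=> j /=; apply: (le_trans _ (le_bmax _ _ (enum_val j))).
apply: sum_sub => [z|z]; first by apply: prodr_ge0 => i _; exact: hP.
apply: contra => /eqP h; rewrite /decS h enum_valK_in //.
Qed.

Lemma subc_cc D : const_comp (R:=R) (subc D).
Proof.
move=> j j' /=; rewrite /ptype /encS.
have h : forall (k : 'I_#|Fset|) (a : X), #|[set i : 'I_n | enc c (enum_val k) i == a]%classic| = tstar a :> nat.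
  move=> k a; have := enum_valP k; rewrite inE => /eqP <-.
  rewrite ffunE /cnt inordK // ltnS -[X in (_ <= X)%N]card_ord; exact: max_card.
by apply/funext => a; rewrite !h.
Qed.

Lemma eps0_le_C (W : X -> Y -> R) m : eps0 W c (enc c m) <= eps0C W c.
Proof. exact: (le_bmax _ (fun m => eps0 W c (enc c m)) m). Qed.

Lemma eps1_le_C (V : X -> Y -> R) m : eps1 V c (enc c m) <= eps1C V c.
Proof. exact: (le_bmax _ (fun m => eps1 V c (enc c m)) m). Qed.

Lemma subc_eps0_le (W : X -> Y -> R) D A :
  \sum_(y | D y) mless W xs y <= A -> eps0C W c <= A -> eps0C W (subc D) <= A.
Proof.
move=> hD hC; apply: bmax_le; first exact: le_trans (bmax_ge0 _ _) hC.
move=> j; rewrite /eps0 /=; have [e|ne] := eqVneq (encS j) xs.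
  by rewrite e.
exact: le_trans (eps0_le_C _ (enum_val j)) hC.
Qed.

Lemma subc_eps1_le (V : X -> Y -> R) D B :
  \sum_(y | ~~ D y) mless V xs y <= B -> eps1C V c <= B -> eps1C V (subc D) <= B.
Proof.
move=> hD hC; apply: bmax_le; first exact: le_trans (bmax_ge0 _ _) hC.
move=> j; rewrite /eps1 /=; have [e|ne] := eqVneq (encS j) xs.
  by rewrite e.
exact: le_trans (eps1_le_C _ (enum_val j)) hC.
Qed.

Lemma subc_eps0_ge (W : X -> Y -> R) D :
  \sum_(y | D y) mless W xs y <= eps0C W (subc D).
Proof.
apply: (le_trans _ (le_bmax _ _ j0)); rewrite /eps0 /=.
by under [X in _ <= X]eq_bigl do rewrite eqxx.
Qed.

Lemma subc_eps1_ge (V : X -> Y -> R) D :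
  \sum_(y | ~~ D y) mless V xs y <= eps1C V (subc D).
Proof.
apply: (le_trans _ (le_bmax _ _ j0)); rewrite /eps1 /=.
by under [X in _ <= X]eq_bigl do rewrite eqxx.
Qed.

Lemma xs_code : exists m, xs = enc c m.
Proof. by exists (enum_val j0). Qed.

End Sub.
Section Asym.
Context {R : realType}.

Lemma nat_big (B : R) : exists N, forall n, (N <= n)%N -> B <= n%:R.
Proof.
exists (Num.trunc B).+1 => n hn; apply: ltW; apply: lt_le_trans (truncnS_gt B) _.
by rewrite ler_nat.
Qed.

Lemma ln_over_n (c e : R) : 0 <= c -> 0 < e ->
  exists N, forall n, (N <= n)%N -> c * ln (n.+1)%:R / n%:R <= e.
Proof.
move=> c0 e0; set K := 4 * c / e + 1.
have K1 : 1 <= K.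
  by rewrite /K lerDr; apply: divr_ge0; [apply: mulr_ge0 | apply: ltW].
have K0 : 0 < K by apply: lt_le_trans K1.
have lK : 0 <= ln K by apply: ln_ge0.
have [N hN] := nat_big (2 * c * ln K / e).
exists (maxn N 1) => n; rewrite geq_max => /andP[/hN hB n1].
set m := n%:R.
have m1 : 1 <= m by rewrite /m ler1n.
have m0 : 0 < m by apply: lt_le_trans m1.
have hL : ln (n.+1)%:R <= ln K + (m + 1) / K.
  have h1 : 0 < (n.+1)%:R / K :> R by rewrite divr_gt0.
  have -> : ln (n.+1)%:R = ln K + ln ((n.+1)%:R / K).
    by rewrite ln_div ?posrE // addrC subrK.
  by rewrite lerD2l -natr1 ltW // ln_sublinear // natr1.
rewrite ler_pdivrMr //.
apply: le_trans (ler_wpM2l c0 hL) _.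
have h1 : 2 * c * ln K <= e * m.
  by move: hB; rewrite ler_pdivrMr // [m * e]mulrC.
have h2 : c * ((m + 1) / K) <= e * m / 2.
  rewrite mulrA ler_pdivrMr // /K.
  have -> : e * m / 2 * (4 * c / e + 1) = 2 * c * m + e * m / 2.
    by field; rewrite gt_eqF.
  nra.
nra.
Qed.

Local Open Scope ereal_scope.

Lemma einfs_le_lim (u : (\bar R)^nat) N : einfs u N <= limn_einf u.
Proof.
rewrite limn_einf_lim (cvg_lim _ (@cvg_einfs_sup R u)) //.
by apply: ereal_sup_ubound; exists N.
Qed.

Lemma liminf_mono (u v : (\bar R)^nat) N :
  (forall n, (N <= n)%N -> u n <= v n) -> limn_einf u <= limn_einf v.
Proof.
move=> h; rewrite !limn_einf_lim; apply: lee_lim; [exact: is_cvg_einfs|exact: is_cvg_einfs|].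
exists N => // m Nm /=; apply: le_ereal_inf_tmp => _ [k /= mk <-].
apply: le_trans (h k (leq_trans Nm mk)); apply: ereal_inf_lbound; by exists k.
Qed.

Lemma liminf_approx (u v : (\bar R)^nat) :
  (forall e : R, (0 < e)%R -> exists N, forall n, (N <= n)%N -> u n <= v n + e%:E) ->
  limn_einf u <= limn_einf v.
Proof.
move=> h; apply/lee_addgt0Pr => e e0; have [N hN] := h e e0.
apply: le_trans (liminf_mono _ _ _ hN) _.
rewrite (_ : (fun n => v n + e%:E) = (fun n => e%:E + v n)); last first.
  by apply/funext => n; rewrite addeC.
by rewrite limn_einf_shift // addeC.
Qed.

Lemma liminf_le_freq (u : (\bar R)^nat) l :
  (forall e : R, (0 < e)%R -> forall N, exists2 n, (N <= n)%N & u n <= l + e%:E) ->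
  limn_einf u <= l.
Proof.
move=> h; apply/lee_addgt0Pr => e e0; rewrite limn_einf_lim.
apply: lime_le; first exact: is_cvg_einfs.
exists 0%N => // N _ /=; have [n Nn hn] := h e e0 N.
apply: le_trans hn; apply: ereal_inf_lbound; by exists n.
Qed.

Lemma liminf_freq (u : (\bar R)^nat) (e : R) : (0 < e)%R -> limn_einf u != -oo ->
  forall N, exists2 n, (N <= n)%N & u n <= limn_einf u + e%:E.
Proof.
move=> e0; case E: (limn_einf u) => [l| |] // _ N.
- have h := einfs_le_lim u N; rewrite E in h.
  have : einfs u N < (l + e)%:E by apply: le_lt_trans h _; rewrite lte_fin ltrDl.
  move=> /ereal_inf_lt [_ [k /= Nk <-]] hk; exists k => //; exact: ltW.
- by exists N => //; rewrite addye // leey.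
Qed.

Lemma liminf_cst (x : \bar R) : limn_einf (fun _ => x) = x.
Proof.
have h : cvgn (fun _ : nat => x) by apply: is_cvg_cst.
by rewrite is_cvg_limn_einfE // lim_cst.
Qed.

End Asym.
Section Seqs.
Context {R : realType}.
Local Open Scope ereal_scope.

Definition tol (k : nat) : R := (k.+1%:R)^-1.

Lemma tol_gt0 k : (0 < tol k)%R.
Proof. by rewrite /tol invr_gt0. Qed.

Lemma tol_le k k' : (k' <= k)%N -> (tol k <= tol k')%R.
Proof. by move=> h; rewrite /tol lef_pV2 ?posrE // ler_nat ltnS. Qed.

Lemma two_subseq (e f : (\bar R)^nat) (E F : \bar R) :
  (forall k N, exists n, (N < n)%N /\ e n <= E + (tol k)%:E) ->
  (forall k N, exists n, (N < n)%N /\ f n <= F + (tol k)%:E) ->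
  exists N0 N1 : nat -> bool,
   [/\ forall n, N0 n -> N1 n -> False,
       forall n, N0 n -> (0 < n)%N,
       forall n, N1 n -> (0 < n)%N,
       (forall k N, exists n, [/\ (N <= n)%N, N0 n & e n <= E + (tol k)%:E]) &
       (forall k N, exists n, [/\ (N <= n)%N, N1 n & f n <= F + (tol k)%:E])].
Proof.
move=> h0 h1.
have [g0 hg0] := boolp.choice (fun kN : nat * nat => h0 kN.1 kN.2).
have [g1 hg1] := boolp.choice (fun kN : nat * nat => h1 kN.1 kN.2).
pose s := fix s k := match k with 0%N => 0%N | k'.+1 =>
  if odd k' then g1 (k', s k') else g0 (k', s k') end.
have sS : forall k, s k.+1 = if odd k then g1 (k, s k) else g0 (k, s k) by [].
have slt : forall k, (s k < s k.+1)%N.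
  by move=> k; rewrite sS; case: ifP => _; [case: (hg1 (k, s k))|case: (hg0 (k, s k))].
have smono : forall k j, (k < j)%N -> (s k < s j)%N.
  move=> k j; elim: j => // j IH; rewrite ltnS leq_eqVlt => /orP[/eqP->|/IH h].
    exact: slt.
  exact: ltn_trans h (slt j).
have sge : forall k, (k <= s k)%N.
  by elim=> // k IH; apply: leq_ltn_trans IH (slt k).
have sinj : forall k j, s k = s j -> k = j.
  move=> k j hkj; have [h|h|//] := ltngtP k j.
    by have := smono _ _ h; rewrite hkj ltnn.
  by have := smono _ _ h; rewrite hkj ltnn.
pose N0 n := [exists k : 'I_n, ~~ odd k && (s k.+1 == n)].
pose N1 n := [exists k : 'I_n, odd k && (s k.+1 == n)].
exists N0, N1; split.
- move=> n /existsP[k /andP[ok /eqP sk]] /existsP[j /andP[oj /eqP sj]].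
  have := sinj _ _ (etrans sk (esym sj)) => /eq_add_S kj.
  by move: ok; rewrite kj oj.
- move=> n /existsP[k /andP[_ /eqP <-]]; exact: leq_ltn_trans (leq0n _) (slt k).
- move=> n /existsP[k /andP[_ /eqP <-]]; exact: leq_ltn_trans (leq0n _) (slt k).
- move=> k N; set k2 := ((k + N).*2)%N.
  have ok : ~~ odd k2 by rewrite odd_double.
  have lt : (k2 < s k2.+1)%N by apply: leq_trans (sge _); rewrite ltnS.
  exists (s k2.+1); split.
  + apply: leq_trans (sge _); rewrite /k2 -addnn; lia.
  + by apply/existsP; exists (Ordinal lt); apply/andP; split; [exact: ok|].
  + rewrite sS (negbTE ok); case: (hg0 (k2, s k2)) => _ /= h.
    apply: le_trans h _; apply: leeD => //; rewrite lee_fin; apply: tol_le.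
    rewrite /k2 -addnn; lia.
- move=> k N; set k2 := ((k + N).*2.+1)%N.
  have ok : odd k2 by rewrite /k2 /= odd_double.
  have lt : (k2 < s k2.+1)%N by apply: leq_trans (sge _); rewrite ltnS.
  exists (s k2.+1); split.
  + apply: leq_trans (sge _); rewrite /k2 -addnn; lia.
  + by apply/existsP; exists (Ordinal lt); apply/andP; split; [exact: ok|].
  + rewrite sS ok; case: (hg1 (k2, s k2)) => _ /= h.
    apply: le_trans h _; apply: leeD => //; rewrite lee_fin; apply: tol_le.
    rewrite /k2 -addnn; lia.
Qed.

Lemma freq_of_liminf (u : (\bar R)^nat) :
  (forall n, 0 <= u n) ->
  forall k N, exists n, (N < n)%N /\ u n <= limn_einf u + (tol k)%:E.
Proof.
move=> u0 k N.
have h : limn_einf u != -oo.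
  have : limn_einf (fun _ => 0) <= limn_einf u by apply: (liminf_mono _ _ 0%N) => n _.
  by rewrite liminf_cst; case: (limn_einf u).
have [n hn hu] := liminf_freq u _ (tol_gt0 k) h N.+1.
by exists n.
Qed.

Definition expo' (a : R) (n : nat) := expo a n.

Lemma expo_pos (a : R) n : (0 < a)%R -> expo a n = (- ln a / n%:R)%:E.
Proof. by move=> a0; rewrite /expo gt_eqF. Qed.

Lemma expo_ge0 (a : R) n : (a <= 1)%R -> 0 <= expo a n.
Proof.
move=> a1; rewrite /expo; case: ifP => // _; rewrite lee_fin.
by apply: mulr_ge0; [rewrite oppr_ge0 ln_le0|rewrite invr_ge0].
Qed.

Lemma expo_mono (a a' : R) n : (0 < a')%R -> (a' <= a)%R -> expo a n <= expo a' n.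
Proof.
move=> a'0 aa; have a0 := lt_le_trans a'0 aa.
rewrite !expo_pos // lee_fin; apply: ler_wpM2r; first by rewrite invr_ge0.
by rewrite lerN2 ler_ln.
Qed.

Lemma expo_bound (a a' K : R) n : (0 < a)%R -> (0 < K)%R -> (a / K <= a')%R ->
  expo a' n <= expo a n + (ln K / n%:R)%:E.
Proof.
move=> a0 K0 h; have aK : (0 < a / K)%R by rewrite divr_gt0.
have a'0 := lt_le_trans aK h.
rewrite !expo_pos // -EFinD lee_fin -mulrDl; apply: ler_wpM2r; first by rewrite invr_ge0.
have : (ln (a / K) <= ln a')%R by rewrite ler_ln.
by rewrite ln_div ?posrE //; lra.
Qed.

Lemma tol_arith (L eps : R) k0 n : (0 <= L)%R -> (0 < eps)%R ->
  ((1 + L) / eps <= k0%:R)%R -> (k0.+1 <= n)%N -> (tol k0 + L / n%:R <= eps)%R.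
Proof.
move=> L0 e0 hk hn.
have m0 : (0 < k0.+1%:R :> R)%R by rewrite ltr0n.
have n0 : (0 < n%:R :> R)%R by rewrite ltr0n (leq_trans _ hn).
have h1 : (L / n%:R <= L / k0.+1%:R)%R.
  by apply: ler_wpM2l => //; rewrite lef_pV2 ?posrE // ler_nat.
apply: le_trans (lerD (lexx _) h1) _.
rewrite /tol -[X in (X + _)%R]mul1r -mulrDl ler_pdivrMr //.
move: hk; rewrite ler_pdivrMr // => hk.
apply: le_trans hk _; rewrite [X in (_ <= X)%R]mulrC; apply: ler_wpM2r; [exact: ltW | by rewrite ler_nat].
Qed.

End Seqs.
Theorem lemma2 (R : realType) (X Y Z : finType)
  (PZ : X -> Z -> R) (W V : X -> Y -> R) (b : X -> R) (B : R)
  (hPZ : stochastic PZ) (hW : stochastic W) (hV : stochastic V)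
  (hWV : forall x y, W x y * V x y != 0)
  (hb : forall x, 0 <= b x) (hB : 0 <= B)
  (Rt E0 E1 : \bar R) (C : forall n, jcode X Y Z n) :
  achieves PZ W V b B C Rt E0 E1 ->
  exists C' : forall n, jcode X Y Z n,
    achieves PZ W V b B C' Rt E0 E1 /\ (forall n, const_comp (R:=R) (C' n)).
Proof.
move=> [hcost [tau tau1 htau] hPe [hRt hE0 hE1]].
have W0 : forall a y, 0 < W a y.
  move=> a y; rewrite lt0r (proj1 hW a y) andbT.
  by apply: contra (hWV a y) => /eqP ->; rewrite mul0r.
have V0 : forall a y, 0 < V a y.
  move=> a y; rewrite lt0r (proj1 hV a y) andbT.
  by apply: contra (hWV a y) => /eqP ->; rewrite mulr0.
have W1 := proj2 hW; have V1 := proj2 hV.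
have PZ0 := proj1 hPZ.
pose A n := eps0C W (C n); pose Bn n := eps1C V (C n).
have A1 : forall n, A n <= 1.
  move=> n; apply: bmax_le => // m; exact: msum_le1.
have B1 : forall n, Bn n <= 1.
  move=> n; apply: bmax_le => // m; exact: msum_le1.
have Atau : forall n, (0 < n)%N -> A n <= tau.
  by move=> n /htau; rewrite ge_max => /andP[].
have Btau : forall n, (0 < n)%N -> Bn n <= tau.
  by move=> n /htau; rewrite ge_max => /andP[].
pose e n := expo (A n) n; pose f n := expo (Bn n) n.
have e0 : forall n, (0 <= e n)%E by move=> n; exact: expo_ge0.
have f0 : forall n, (0 <= f n)%E by move=> n; exact: expo_ge0.
have h0 := freq_of_liminf e e0; have h1 := freq_of_liminf f f0.
rewrite -hE0 in h0; rewrite -hE1 in h1.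
have [N0 [N1 [disj pos0 pos1 fr0 fr1]]] := two_subseq e f E0 E1 h0 h1.
have hD : forall n, exists D : pred (word Y n),
  [/\ \sum_(y | D y) mless W (xs (C n)) y <= A n,
      \sum_(y | ~~ D y) mless V (xs (C n)) y <= Bn n,
      N0 n -> A n / (3%:R * Kc W) <= \sum_(y | D y) mless W (xs (C n)) y &
      N1 n -> Bn n / (3%:R * Kc V) <= \sum_(y | ~~ D y) mless V (xs (C n)) y].
  move=> n; set c := C n; set x := xs c.
  have hA : \sum_(y | disc c y x) mless W x y <= A n := eps0_le_C c W (enum_val (j0 c)).
  have hBB : \sum_(y | ~~ disc c y x) mless V x y <= Bn n := eps1_le_C c V (enum_val (j0 c)).
  have [n0|n0] := boolP (N0 n).
    have np := pos0 n n0.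
    have ex0 : exists y0, disc c y0 x.
      apply: (exists_of_lt1 V V1 x); apply: le_lt_trans hBB _.
      exact: le_lt_trans (Btau n np) tau1.
    have Ap : 0 < A n by apply: lt_le_trans (sum_pos W W0 x _ ex0) hA.
    have [S' [sub hS']] := worsen W W0 W1 x (fun y => disc c y x) (A n) ex0 Ap (A1 n) hA.
    exists S'; split.
    - by case/andP: hS'.
    - apply: le_trans _ hBB; apply: sum_sub => y; first exact: mless_ge0.
      by apply: contra; exact: sub.
    - by case/andP: hS'.
    - by move=> n1; case: (disj n n0 n1).
  have [n1|n1] := boolP (N1 n).
    have np := pos1 n n1.
    have ex0 : exists y0, ~~ disc c y0 x.
      apply: (exists_of_lt1 W W1 x); apply: le_lt_trans _ (le_lt_trans (Atau n np) tau1).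
      by under eq_bigl do rewrite negbK.
    have Bp : 0 < Bn n by apply: lt_le_trans (sum_pos V V0 x _ ex0) hBB.
    have [S' [sub hS']] :=
      worsen V V0 V1 x (fun y => ~~ disc c y x) (Bn n) ex0 Bp (B1 n) hBB.
    exists (fun y => ~~ S' y); split.
    - apply: le_trans _ hA; apply: sum_sub => y; first exact: mless_ge0.
      by case hd: (disc c y x) => //; rewrite sub // hd.
    - by under eq_bigl do rewrite negbK; case/andP: hS'.
    - by [].
    - by under eq_bigl do rewrite negbK; case/andP: hS'.
  by exists (fun y => disc c y x); split.
pose D n := proj1_sig (cid (hD n)).
have hDp : forall n, _ := fun n => proj2_sig (cid (hD n)).
pose C' n := subc (C n) (D n).
exists C'; split; last by move=> n; exact: subc_cc.
have hA' : forall n, eps0C W (C' n) <= A n.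
  by move=> n; apply: subc_eps0_le => //; case: (hDp n).
have hB' : forall n, eps1C V (C' n) <= Bn n.
  by move=> n; apply: subc_eps1_le => //; case: (hDp n).
have hAlo : forall n, \sum_(y | D n y) mless W (xs (C n)) y <= eps0C W (C' n).
  by move=> n; exact: subc_eps0_ge.
have hBlo : forall n, \sum_(y | ~~ D n y) mless V (xs (C n)) y <= eps1C V (C' n).
  by move=> n; exact: subc_eps1_ge.
have Wpos : forall n, (0 < n)%N -> 0 < \sum_(y | D n y) mless W (xs (C n)) y.
  move=> n np; apply: sum_pos => //; apply: (exists_of_lt1 V V1).
  case: (hDp n) => _ h _ _; apply: le_lt_trans h _.
  exact: le_lt_trans (Btau n np) tau1.
have Vpos : forall n, (0 < n)%N -> 0 < \sum_(y | ~~ D n y) mless V (xs (C n)) y.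
  move=> n np; apply: sum_pos => //; apply: (exists_of_lt1 W W1).
  case: (hDp n) => h _ _ _; under eq_bigl do rewrite negbK.
  apply: le_lt_trans h _; exact: le_lt_trans (Atau n np) tau1.
have KW : 0 < 3%:R * Kc W by have := Kc_ge1 W W0; lra.
have KV : 0 < 3%:R * Kc V by have := Kc_ge1 V V0; lra.
have LW : 0 <= ln (3%:R * Kc W) by apply: ln_ge0; have := Kc_ge1 W W0; lra.
have LV : 0 <= ln (3%:R * Kc V) by apply: ln_ge0; have := Kc_ge1 V V0; lra.
split.
- by move=> n; apply: subc_cost.
- exists tau => // n np; rewrite ge_max; apply/andP; split.
    exact: le_trans (hA' n) (Atau n np).
  exact: le_trans (hB' n) (Btau n np).
- apply: (@squeeze_cvgr _ _ _ _ (fun=> 0) (fun n => Pe PZ (C n))); last exact: hPe.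
    apply: nearW => n; apply/andP; split; first exact: bmax_ge0.
    exact: subc_Pe.
  exact: (@cvg_cst R^o 0 nat _ _).
split.
- rewrite hRt; apply/eqP; rewrite eq_le; apply/andP; split.
    apply: liminf_approx => eps eps0.
    have [N hN] := ln_over_n (#|X|%:R) eps (ler0n _ _) eps0.
    exists (maxn N 1) => n; rewrite geq_max => /andP[/hN hn n1].
    rewrite -EFinD lee_fin /C' /=.
    set M := msize (C n); set M' := #|Fset (C n)|.
    have M0 : 0 < M%:R :> R by rewrite ltr0n msize_gt0.
    have M'0 : 0 < M'%:R :> R by rewrite ltr0n Fpos.
    have nX0 : 0 < (n.+1)%:R ^+ #|X| :> R by rewrite exprn_gt0 // ltr0n.
    have hM : M%:R <= M'%:R * (n.+1)%:R ^+ #|X| :> R.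
      by rewrite -natrX -natrM ler_nat Fset_ge.
    have Hl : ln (M%:R : R) <= ln (M'%:R : R) + #|X|%:R * ln ((n.+1)%:R : R).
      rewrite mulr_natl -lnXn ?ltr0n // -lnM ?posrE //.
      by rewrite ler_ln ?posrE // mulr_gt0.
    apply: le_trans (_ : _ <= (ln M'%:R + #|X|%:R * ln (n.+1)%:R) / n%:R) _.
      by apply: ler_wpM2r => //; rewrite invr_ge0.
    by rewrite mulrDl lerD2l.
  apply: (liminf_mono _ _ 0%N) => n _; rewrite lee_fin /C' /=.
  apply: ler_wpM2r; first by rewrite invr_ge0.
  by rewrite ler_ln ?posrE ?ltr0n ?Fpos ?msize_gt0 // ler_nat Fset_le.
- rewrite hE0; apply/eqP; rewrite eq_le; apply/andP; split.
    apply: (liminf_mono _ _ 1%N) => n n1; apply: expo_mono; last exact: hA'.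
    exact: lt_le_trans (Wpos n n1) (hAlo n).
  rewrite -hE0; apply: liminf_le_freq => eps eps0 N.
  have [k0 hk0] := nat_big ((1 + ln (3%:R * Kc W)) / eps).
  have [n [hNn n0 hen]] := fr0 k0 (maxn N k0.+1).
  exists n; first by apply: leq_trans hNn; rewrite leq_maxl.
  have nk : (k0.+1 <= n)%N by apply: leq_trans hNn; rewrite leq_maxr.
  have np := pos0 n n0.
  have Ap : 0 < A n by case: (hDp n) => h _ _ _; exact: lt_le_trans (Wpos n np) h.
  have hlo : A n / (3%:R * Kc W) <= eps0C W (C' n).
    by case: (hDp n) => _ _ h _; exact: le_trans (h n0) (hAlo n).
  apply: le_trans (expo_bound _ _ _ n Ap KW hlo) _.
  apply: le_trans (leeD hen (lexx _)) _.
  rewrite -addeA -EFinD; apply: leeD => //; rewrite lee_fin.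
  exact: tol_arith (hk0 k0 (leqnn _)) nk.
- rewrite hE1; apply/eqP; rewrite eq_le; apply/andP; split.
    apply: (liminf_mono _ _ 1%N) => n n1; apply: expo_mono; last exact: hB'.
    exact: lt_le_trans (Vpos n n1) (hBlo n).
  rewrite -hE1; apply: liminf_le_freq => eps eps0 N.
  have [k0 hk0] := nat_big ((1 + ln (3%:R * Kc V)) / eps).
  have [n [hNn n1 hfn]] := fr1 k0 (maxn N k0.+1).
  exists n; first by apply: leq_trans hNn; rewrite leq_maxl.
  have nk : (k0.+1 <= n)%N by apply: leq_trans hNn; rewrite leq_maxr.
  have np := pos1 n n1.
  have Bp : 0 < Bn n by case: (hDp n) => _ h _ _; exact: lt_le_trans (Vpos n np) h.
  have hlo : Bn n / (3%:R * Kc V) <= eps1C V (C' n).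
    by case: (hDp n) => _ _ _ h; exact: le_trans (h n1) (hBlo n).
  apply: le_trans (expo_bound _ _ _ n Bp KV hlo) _.
  apply: le_trans (leeD hfn (lexx _)) _.
  rewrite -addeA -EFinD; apply: leeD => //; rewrite lee_fin.
  exact: tol_arith (hk0 k0 (leqnn _)) nk.
Qed.
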